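(* Let $A^{(1)},A^{(2)},A^{(3)},A^{(4)}$ be i.i.d. random variables with values in $\{1,2,3,\dots\}$, and let $X^{(a)},Y^{(b)},Z^{(c)}$ ($a,b,c\ge1$) be i.i.d. random variables with values in $[0,\infty)$, all of these random variables mutually independent. Then $$\max\Big(\sum_{a=1}^{A^{(1)}}X^{(a)},\ \sum_{b=1}^{A^{(2)}}Y^{(b)}\Big)\ \ge_{\mathrm{st}}\ \sum_{a=1}^{\max(A^{(3)},A^{(4)})}Z^{(a)}.$$
   Context: For random variables $X,Y$ with domains $D_X,D_Y\subseteq\mathbb{R}$, $X\ge_{\mathrm{st}}Y$ ($X$ stochastically dominates $Y$) means $\Pr(X>z)\ge\Pr(Y>z)$ for all $z\in D_X\cap D_Y$. *)

(* Defs.v *)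
From HB Require Import structures.
From mathcomp Require Import all_boot all_order all_algebra.
From mathcomp Require Import all_classical all_reals all_analysis.
Set Implicit Arguments. Unset Strict Implicit. Unset Printing Implicit Defensive.
Import Order.TTheory GRing.Theory Num.Theory.
Local Open Scope classical_set_scope.
Local Open Scope ring_scope.

Definition mutually_independent d (T : measurableType d) (R : realType)
  (P : probability T R) (I : eqType) (G : I -> set (set T)) : Prop :=
  forall (s : seq I) (E : I -> set T), uniq s ->
    (forall j, j \in s -> G j (E j)) ->
    P [set w | forall j, j \in s -> E j w] = (\prod_(j <- s) P (E j))%E.

Definition sigmaR d (T : measurableType d) (R : realType) (X : T -> R) : set (set T) :=
  [set E | exists B : set R, measurable B /\ E = X @^-1` B].

(* sigma-algebra generated by a nat-valued random variable (discrete sigma-algebra on nat) *)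
Definition sigmaN d (T : measurableType d) (A : T -> nat) : set (set T) :=
  [set E | exists B : set nat, E = A @^-1` B].

(* Stochastic dominance U >=_st V, where DU, DV are the domains of U and V:
   Pr(U > z) >= Pr(V > z) for all z in DU `&` DV. *)
Definition st_dominates d (T : measurableType d) (R : realType) (P : probability T R)
  (U V : T -> R) (DU DV : set R) : Prop :=
  forall z : R, DU z -> DV z ->
    (P [set w | (z < V w)%R] <= P [set w | (z < U w)%R])%E.

(* Main.v *)
Require Import Defs.
From HB Require Import structures.
From mathcomp Require Import all_boot all_order all_algebra.
From mathcomp Require Import all_classical all_reals all_analysis.
Import Order.TTheory GRing.Theory Num.Theory.
Local Open Scope classical_set_scope.
Local Open Scope ring_scope.
Set Implicit Arguments. Unset Strict Implicit. Unset Printing Implicit Defensive.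

Section lam.
Context d (T : measurableType d) (R : realType) (P : probability T R).
Local Open Scope ereal_scope.

Lemma Pfin (A : set T) : measurable A -> P A \is a fin_num.
Proof. by move=> mA; apply: fin_num_measure. Qed.

Lemma PD (A B : set T) : measurable A -> measurable B -> B `<=` A ->
  P (A `\` B) = P A - P B.
Proof.
move=> mA mB BA; rewrite measureD //; first by rewrite setIidr.
by rewrite (le_lt_trans (probability_le1 _ mA)) // ltry.
Qed.

Lemma lam_sys (S : Type) (f g : set S -> set T) (c : \bar R) :
  c \is a fin_num ->
  (forall A B, f (A `\` B) = f A `\` f B) -> (forall A B, g (A `\` B) = g A `\` g B) ->
  (forall F : (set S)^nat, f (\bigcup_n F n) = \bigcup_n f (F n)) ->
  (forall F : (set S)^nat, g (\bigcup_n F n) = \bigcup_n g (F n)) ->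
  (forall A B, A `<=` B -> f A `<=` f B) -> (forall A B, A `<=` B -> g A `<=` g B) ->
  measurable (f setT) -> measurable (g setT) -> P (f setT) = c * P (g setT) ->
  lambda_system setT [set C | measurable (f C) /\ measurable (g C) /\ P (f C) = c * P (g C)].
Proof.
move=> cfin fD gD fU gU fS gS mfT mgT PT; split => //.
- move=> A B BA [mfA [mgA eA]] [mfB [mgB eB]]; rewrite /= fD gD.
  split; first exact: measurableD.
  split; first exact: measurableD.
  rewrite !PD //; [|exact: gS|exact: fS].
  by rewrite eA eB muleBr // fin_num_adde_defl // ?Pfin // fin_numN Pfin.
- move=> F ndF HF; rewrite /= fU gU; split.
    by apply: bigcupT_measurable => n; case: (HF n).
  split; first by apply: bigcupT_measurable => n; case: (HF n) => _ [].
  have h1 : (P \o (fun n => f (F n))) @ \oo --> P (\bigcup_n f (F n)).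
    apply: nondecreasing_cvg_mu.
    - by move=> n; case: (HF n).
    - by apply: bigcupT_measurable => n; case: (HF n).
    - by move=> m n mn; apply/subsetPset/fS/subsetPset/ndF.
  have h2 : (P \o (fun n => g (F n))) @ \oo --> P (\bigcup_n g (F n)).
    apply: nondecreasing_cvg_mu.
    - by move=> n; case: (HF n) => _ [].
    - by apply: bigcupT_measurable => n; case: (HF n) => _ [].
    - by move=> m n mn; apply/subsetPset/gS/subsetPset/ndF.
  have h3 := cvgeZl cfin h2.
  have e : (fun n => c * (P \o (fun n => g (F n))) n) = P \o (fun n => f (F n)).
    by apply/funext => n /=; case: (HF n) => _ [_ ->].
  rewrite e in h3.
  exact: (cvg_unique _ h1 h3).
Qed.
End lam.

Section cyl.
Variables (U : Type) (I : eqType) (H : I -> set (set U)).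
Hypothesis HT : forall j, H j setT.
Hypothesis HI : forall j, setI_closed (H j).

Definition cylset (s : seq I) (F : I -> set U) := [set w | forall j, j \in s -> F j w].

Definition cyl (p : pred I) : set (set U) :=
  [set E | exists s (F : I -> set U), [/\ uniq s, all p s,
     (forall j, j \in s -> H j (F j)) & E = cylset s F]].

Lemma cyl_setI p : setI_closed (cyl p).
Proof.
move=> E1 E2 [s1 [F1 [u1 a1 h1 ->]]] [s2 [F2 [u2 a2 h2 ->]]].
exists (undup (s1 ++ s2)).
exists (fun j => (if j \in s1 then F1 j else setT) `&` (if j \in s2 then F2 j else setT)).
split.
- exact: undup_uniq.
- apply/allP => j; rewrite mem_undup mem_cat => /orP[] js.
    by move/allP: a1; apply.
  by move/allP: a2; apply.
- move=> j _; apply: HI.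
    by case: ifP => js //; apply: h1.
  by case: ifP => js //; apply: h2.
- apply/seteqP; split => w /=.
    move=> [H1 H2] j; rewrite mem_undup mem_cat => _.
    by split; case: ifP => js //; [apply: H1|apply: H2].
  move=> Hw; split => j js.
    by have := Hw j; rewrite mem_undup mem_cat js /= => /(_ isT) [+ _];
     rewrite ?js.
  by have := Hw j; rewrite mem_undup mem_cat js orbT /= => /(_ isT) [_ +];
     rewrite ?js.
Qed.

Lemma cyl_gen (p : pred I) j E : p j -> H j E -> cyl p E.
Proof.
move=> pj hE; exists [:: j], (fun _ => E); split => //=; first by rewrite pj.
  by move=> k; rewrite inE => /eqP ->.
apply/seteqP; split => w /=; first by move=> Ew k.
by move=> /(_ j); rewrite inE eqxx; apply.
Qed.

Lemma sig_gen (p : pred I) j E : p j -> H j E -> <<s cyl p >> E.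
Proof. by move=> pj hE; apply: sub_sigma_algebra; exact: cyl_gen hE. Qed.

Lemma sig_mono (p q : pred I) E : (forall j, p j -> q j) -> <<s cyl p >> E -> <<s cyl q >> E.
Proof.
move=> pq; apply: sub_sigma_algebra2 => F [s [G' [u a h ->]]].
exists s, G'; split => //; apply/allP => j js; apply: pq; move/allP: a; exact.
Qed.

End cyl.

Lemma sigI (U : Type) (G : set (set U)) (A B : set U) :
  <<s G >> A -> <<s G >> B -> <<s G >> (A `&` B).
Proof.
move=> hA hB.
have := (sigma_algebraP (C := <<s G >>) (U := setT) (fun _ _ => @subsetT _ _)).1
  (smallest_sigma_algebra setT G).
by case => _ _ _; apply.
Qed.

Lemma sDIl (T : Type) (A B F : set T) : (A `\` B) `&` F = (A `&` F) `\` (B `&` F).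
Proof. by apply/seteqP; split => w /=; [move=> [[? nb] ?]; split => // -[]|move=> [[? ?] nb]; split => //; split => // bw; apply: nb]. Qed.
Lemma sDIr (T : Type) (A B F : set T) : F `&` (A `\` B) = (F `&` A) `\` (F `&` B).
Proof. by rewrite !(setIC F) sDIl. Qed.
Lemma sUIl (T : Type) (Fs : (set T)^nat) (F : set T) : (\bigcup_n Fs n) `&` F = \bigcup_n (Fs n `&` F).
Proof. by rewrite setI_bigcupl. Qed.
Lemma sUIr (T : Type) (Fs : (set T)^nat) (F : set T) : F `&` (\bigcup_n Fs n) = \bigcup_n (F `&` Fs n).
Proof. by rewrite setI_bigcupr. Qed.

Section grp.
Context d (T : measurableType d) (R : realType) (P : probability T R).
Context (I : eqType) (G : I -> set (set T)).
Hypothesis GT : forall j, G j setT.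
Hypothesis GI : forall j, setI_closed (G j).
Hypothesis Gm : forall j E, G j E -> measurable E.
Hypothesis hind : mutually_independent P G.
Local Open Scope ereal_scope.

Lemma cylset_meas (s : seq I) (F : I -> set T) : (forall j, j \in s -> measurable (F j)) ->
  measurable (cylset s F).
Proof.
elim: s => [|a s IH] hF.
  by rewrite (_ : cylset _ _ = setT) //; apply/seteqP; split => w //=.
rewrite (_ : cylset _ _ = F a `&` cylset s F).
  apply: measurableI; first by apply: hF; rewrite inE eqxx.
  by apply: IH => j js; apply: hF; rewrite inE js orbT.
apply/seteqP; split => w /=.
  by move=> h; split; [apply: h; rewrite inE eqxx|move=> j js; apply: h; rewrite inE js orbT].
by move=> [h1 h2] j; rewrite inE => /orP[/eqP ->|]; [|apply: h2].
Qed.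

Lemma cyl_meas p E : cyl G p E -> measurable E.
Proof.
by move=> [s [F [_ _ h ->]]]; apply: cylset_meas => j js; apply: Gm; apply: h.
Qed.

Lemma sig_meas p E : <<s cyl G p >> E -> measurable E.
Proof.
move=> hE; have : <<s cyl G p >> `<=` measurable.
  apply: smallest_sub; first exact: sigma_algebra_measurable.
  exact: cyl_meas.
by apply.
Qed.

Lemma cyl_indep (p1 p2 : pred I) E F : (forall j, p1 j -> p2 j -> False) ->
  cyl G p1 E -> cyl G p2 F -> P (E `&` F) = P E * P F.
Proof.
move=> dj [s1 [F1 [u1 a1 h1 ->]]] [s2 [F2 [u2 a2 h2 ->]]].
have djs : forall j, j \in s1 -> j \in s2 -> False.
  move=> j j1 j2; apply: (dj j); [by move/allP: a1; apply|by move/allP: a2; apply].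
pose F' j := if j \in s1 then F1 j else F2 j.
have u : uniq (s1 ++ s2).
  rewrite cat_uniq u1 u2 /= andbT; apply/hasPn => j j2; apply/negP => j1.
  exact: (djs j).
have hF' : forall j, j \in s1 ++ s2 -> G j (F' j).
  move=> j; rewrite mem_cat /F'; case: ifP => j1 /=; first by move=> _; apply: h1.
  by apply: h2.
have := hind u hF'.
rewrite big_cat /=.
have -> : [set w | forall j, j \in s1 ++ s2 -> F' j w] = cylset s1 F1 `&` cylset s2 F2.
  apply/seteqP; split => w /=.
    move=> h; split => j js.
      by have := h j; rewrite mem_cat js /F' js => /(_ isT).
    have := h j; rewrite mem_cat js orbT /F'; case: ifP => j1; last by apply.
    by exfalso; apply: (djs j).
  move=> [h1' h2'] j; rewrite mem_cat /F'; case: ifP => j1 /=; first by move=> _; apply: h1'.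
  by apply: h2'.
move=> ->.
rewrite (hind u1 h1) (hind u2 h2).
congr (_ * _).
  rewrite big_seq_cond [RHS]big_seq_cond; apply: eq_bigr => j /andP[j1 _].
  by rewrite /F' j1.
rewrite big_seq_cond [RHS]big_seq_cond; apply: eq_bigr => j /andP[j2 _].
rewrite /F'; case: ifP => // j1; exfalso; exact: (djs j).
Qed.

Lemma sig_indep (p1 p2 : pred I) E F : (forall j, p1 j -> p2 j -> False) ->
  <<s cyl G p1 >> E -> <<s cyl G p2 >> F -> P (E `&` F) = P E * P F.
Proof.
move=> dj hE hF.
have step1 : forall F, cyl G p2 F -> forall E, <<s cyl G p1 >> E -> P (E `&` F) = P E * P F.
  move=> F0 hF0.
  have mF0 := cyl_meas hF0.
  have L := @lam_sys _ _ _ P T (fun C => C `&` F0) id (P F0) (Pfin P mF0).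
  have L' := L (fun A B => sDIl A B F0) (fun _ _ => erefl) (fun Fs => sUIl Fs F0)
    (fun _ => erefl) (fun A B AB => @setSI _ F0 A B AB) (fun _ _ AB => AB).
  rewrite setTI /= probability_setT mule1 in L'.
  have L'' := L' mF0 measurableT erefl.
  have sub := @lambda_system_subset _ _ (@cyl_setI _ _ G GT GI p1) setT _ L''.
  have GH : cyl G p1 `<=` [set C | measurable (C `&` F0) /\ measurable C /\ P (C `&` F0) = P F0 * P C].
    move=> C hC; split; first by apply: measurableI => //; exact: cyl_meas hC.
    split; first exact: cyl_meas hC.
    by rewrite (cyl_indep dj hC hF0) muleC.
  move=> E0 hE0.
  by have [_ [_ ->]] := sub GH (fun _ _ => @subsetT _ _) E0 hE0; rewrite muleC.
have mE := sig_meas hE.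
have L := @lam_sys _ _ _ P T (fun C => E `&` C) id (P E) (Pfin P mE).
have L' := L (fun A B => sDIr A B E) (fun _ _ => erefl) (fun Fs => sUIr Fs E)
  (fun _ => erefl) (fun A B AB => @setIS _ E A B AB) (fun _ _ AB => AB).
rewrite setIT /= probability_setT mule1 in L'.
have L'' := L' mE measurableT erefl.
have sub := @lambda_system_subset _ _ (@cyl_setI _ _ G GT GI p2) setT _ L''.
have GH : cyl G p2 `<=` [set C | measurable (E `&` C) /\ measurable C /\ P (E `&` C) = P E * P C].
  move=> C hC; split; first by apply: measurableI => //; exact: cyl_meas hC.
  split; first exact: cyl_meas hC.
  exact: step1.
by have [_ [_ ->]] := sub GH (fun _ _ => @subsetT _ _) F hF.
Qed.

End grp.

Definition seqR (R : realType) : Type := nat -> R.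
HB.instance Definition _ (R : realType) := Choice.on (seqR R).
HB.instance Definition _ (R : realType) := isPointed.Build (seqR R) (fun _ => 0).

Section sums.
Context (R : realType).

Lemma sum_le_sig (U : pointedType) (Gs : set (set U)) (h : nat -> U -> R) m z :
  (forall a B, measurable B -> <<s Gs >> (h a @^-1` B)) ->
  <<s Gs >> [set u | \sum_(0 <= a < m) h a u <= z].
Proof.
move=> hG.
have mh : forall a, measurable_fun (setT : set (g_sigma_algebraType Gs))
   (h a : g_sigma_algebraType Gs -> R).
  by move=> a _ B mB; rewrite setTI; exact: hG.
have ms := @measurable_sum _ (g_sigma_algebraType Gs) R setT nat (index_iota 0 m) h mh.
have := ms measurableT _ (measurable_itv `]-oo, z]).
rewrite setTI.
suff -> : [set u | \sum_(0 <= a < m) h a u <= z] =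
  ((fun x : g_sigma_algebraType Gs => \sum_(i <- index_iota 0 m) h i x) @^-1` [set` `]-oo, z]]) by [].
by apply/seteqP; split => u /=; rewrite in_itv /=.
Qed.

Definition Hc (j : nat) : set (set (seqR R)) :=
  [set E | exists B : set R, measurable B /\ E = (fun f : seqR R => f j) @^-1` B].

Lemma HcT j : Hc j setT.
Proof. by exists setT; split => //; apply/seteqP; split. Qed.

Lemma HcI j : setI_closed (Hc j).
Proof.
move=> _ _ [B [mB ->]] [B' [mB' ->]]; exists (B `&` B'); split.
  exact: measurableI.
by apply/seteqP; split.
Qed.

Lemma Hc_repr j E : Hc j E ->
  measurable [set x | E (fun a => if a == j then x else 0)] /\
  forall f : seqR R, E f = [set x | E (fun a => if a == j then x else 0)] (f j).
Proof.
move=> [B [mB ->]]; split => /=; first by rewrite eqxx; exact: mB.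
by move=> f; rewrite eqxx.
Qed.

Context d (T : measurableType d) (P : probability T R).
Local Open Scope ereal_scope.

Lemma law (Wk W0 : nat -> T -> R)
  (mWk : forall a, measurable_fun setT (Wk a))
  (mW0 : forall a, measurable_fun setT (W0 a))
  (indk : forall (s : seq nat) (B : nat -> set R), uniq s ->
     (forall j, j \in s -> measurable (B j)) ->
     P [set w | forall j, j \in s -> B j (Wk j w)] = \prod_(j <- s) P (Wk j @^-1` B j))
  (ind0 : forall (s : seq nat) (B : nat -> set R), uniq s ->
     (forall j, j \in s -> measurable (B j)) ->
     P [set w | forall j, j \in s -> B j (W0 j w)] = \prod_(j <- s) P (W0 j @^-1` B j))
  (dk : forall a B, measurable B -> P (Wk a @^-1` B) = P (W0 a @^-1` B)) m z :
  P [set w | (\sum_(0 <= a < m) Wk a w <= z)%R] = P [set w | (\sum_(0 <= a < m) W0 a w <= z)%R].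
Proof.
pose fk (C : set (seqR R)) := [set w | C (fun a => Wk a w)].
pose f0 (C : set (seqR R)) := [set w | C (fun a => W0 a w)].
have L := @lam_sys _ _ _ P (seqR R) fk f0 1 (fin_numE _).
have L' := L (fun A B => erefl) (fun A B => erefl)
  (fun Fs => erefl) (fun Fs => erefl) (fun A B AB w => AB _) (fun A B AB w => AB _)
  measurableT measurableT.
rewrite mul1e in L'.
have L'' := L' erefl.
have mWkB : forall a B, measurable B -> measurable (Wk a @^-1` B).
  by move=> a B mB; rewrite -[_ @^-1` _]setTI; apply: mWk.
have mW0B : forall a B, measurable B -> measurable (W0 a @^-1` B).
  by move=> a B mB; rewrite -[_ @^-1` _]setTI; apply: mW0.
have GH : cyl Hc predT `<=` [set C | measurable (fk C) /\ measurable (f0 C) /\ P (fk C) = 1 * P (f0 C)].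
  move=> _ [s [F [u _ hF ->]]].
  pose B j := [set x : R | F j (fun a => if a == j then x else 0%R)].
  have mB : forall j, j \in s -> measurable (B j) by move=> j /hF /Hc_repr [].
  have eF : forall j, j \in s -> forall f, F j f = B j (f j).
    by move=> j /hF /Hc_repr [_]; apply.
  have ek : fk (cylset s F) = [set w | forall j, j \in s -> B j (Wk j w)].
    apply/seteqP; split => w /= h j js; [by have := h j js; rewrite eF|by rewrite eF //; exact: h].
  have e0 : f0 (cylset s F) = [set w | forall j, j \in s -> B j (W0 j w)].
    apply/seteqP; split => w /= h j js; [by have := h j js; rewrite eF|by rewrite eF //; exact: h].
  rewrite /= -/(fk _) -/(f0 _) ek e0 mul1e; split.
    by apply: cylset_meas => j js; apply: mWkB; apply: mB.
  split; first by apply: cylset_meas => j js; apply: mW0B; apply: mB.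
  rewrite indk // ind0 //.
  by rewrite big_seq [RHS]big_seq; apply: eq_bigr => j js; apply: dk; apply: mB.
have sub := @lambda_system_subset _ _ (@cyl_setI _ _ Hc HcT HcI predT) setT _ L'' GH
  (fun _ _ => @subsetT _ _).
have hS : <<s cyl Hc predT >> [set f : seqR R | (\sum_(0 <= a < m) f a <= z)%R].
  have := (@sum_le_sig (seqR R) (cyl Hc predT) (fun a (f : seqR R) => f a) m z).
  apply => a B mB.
  by apply: (@sig_gen _ _ Hc predT a) => //; exists B.
have [_ [_ ]] := sub _ hS.
by rewrite mul1e.
Qed.

End sums.
Theorem corollary1 (d : measure_display) (T : measurableType d) (R : realType)
  (P : probability T R)
  (A1 A2 A3 A4 : T -> nat) (X Y Z : nat -> T -> R)
  (* A^(i) take values in {1,2,3,...} and are random variables *)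
  (hA1 : forall w, (0 < A1 w)%N) (hA2 : forall w, (0 < A2 w)%N)
  (hA3 : forall w, (0 < A3 w)%N) (hA4 : forall w, (0 < A4 w)%N)
  (mA1 : forall n, measurable (A1 @^-1` [set n]))
  (mA2 : forall n, measurable (A2 @^-1` [set n]))
  (mA3 : forall n, measurable (A3 @^-1` [set n]))
  (mA4 : forall n, measurable (A4 @^-1` [set n]))
  (* A^(i) identically distributed *)
  (dA2 : forall B : set nat, P (A2 @^-1` B) = P (A1 @^-1` B))
  (dA3 : forall B : set nat, P (A3 @^-1` B) = P (A1 @^-1` B))
  (dA4 : forall B : set nat, P (A4 @^-1` B) = P (A1 @^-1` B))
  (* X^(a), Y^(b), Z^(c) are [0,oo)-valued random variables *)
  (mX : forall a, measurable_fun setT (X a))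
  (mY : forall a, measurable_fun setT (Y a))
  (mZ : forall a, measurable_fun setT (Z a))
  (hX : forall a w, 0 <= X a w) (hY : forall a w, 0 <= Y a w)
  (hZ : forall a w, 0 <= Z a w)
  (* all X^(a), Y^(b), Z^(c) identically distributed *)
  (dX : forall a (B : set R), measurable B -> P (X a @^-1` B) = P (X 0%N @^-1` B))
  (dY : forall a (B : set R), measurable B -> P (Y a @^-1` B) = P (X 0%N @^-1` B))
  (dZ : forall a (B : set R), measurable B -> P (Z a @^-1` B) = P (X 0%N @^-1` B))
  (* all these random variables are mutually independent *)
  (hind : mutually_independent P
     (fun i : ('I_4 + ('I_3 * nat))%type =>
        match i with
        | inl k => sigmaN (nth A1 [:: A1; A2; A3; A4] k)
        | inr (k, a) => sigmaR (nth X [:: X; Y; Z] k a)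
        end)) :
  st_dominates P
    (fun w => Num.max (\sum_(0 <= a < A1 w) X a w) (\sum_(0 <= b < A2 w) Y b w))
    (fun w => \sum_(0 <= c < maxn (A3 w) (A4 w)) Z c w)
    [set z | 0 <= z] [set z | 0 <= z].
Proof.
move=> z hz _.
pose Idx := ('I_4 + ('I_3 * nat))%type.
pose AA (k : 'I_4) := nth A1 [:: A1; A2; A3; A4] k.
pose W (k : 'I_3) := nth X [:: X; Y; Z] k.
pose G := fun i : Idx => match i with
        | inl k => sigmaN (AA k)
        | inr (k, a) => sigmaR (W k a) end.
have hind' : mutually_independent P G := hind.
have mAA : forall k n, measurable (AA k @^-1` [set n]).
  by case=> [[|[|[|[|]]]] ?].
have mW : forall k a, measurable_fun setT (W k a).
  by case=> [[|[|[|]]] ?].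
have GT : forall i, G i setT.
  case=> [k|[k a]]; first by exists setT.
  by exists setT; split.
have GI : forall i, setI_closed (G i).
  case=> [k|[k a]].
    by move=> _ _ [B ->] [B' ->]; exists (B `&` B').
  move=> _ _ [B [mB ->]] [B' [mB' ->]]; exists (B `&` B'); split => //.
  exact: measurableI.
have Gm : forall i E, G i E -> measurable E.
  case=> [k|[k a]] E.
    move=> [B ->].
    rewrite (_ : _ @^-1` _ = \bigcup_(n in B) (AA k @^-1` [set n])).
      by apply: bigcup_measurable => n _; apply: mAA.
    by apply/seteqP; split => w /=; [move=> Bw; exists (AA k w)|move=> [n Bn ->]].
  move=> [B [mB ->]]; rewrite -[_ @^-1` _]setTI; exact: mW.
pose pA (k : 'I_4) : pred Idx := fun i => i == inl k.
pose pW (k : 'I_3) : pred Idx := fun i => if i is inr (k', _) then k' == k else false.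
have evA : forall k m, <<s cyl G (pA k) >> (AA k @^-1` [set m]).
  move=> k m; apply: (@sig_gen _ _ G (pA k) (inl k)); first by rewrite /pA.
  by exists [set m].
have evW : forall k m, <<s cyl G (pW k) >> [set w | \sum_(0 <= a < m) W k a w <= z].
  move=> k m; apply: sum_le_sig => a B mB.
  apply: (@sig_gen _ _ G (pW k) (inr (k, a))); first by rewrite /pW.
  by exists B.
have indW : forall (k : 'I_3) (s : seq nat) (B : nat -> set R), uniq s ->
     (forall j, j \in s -> measurable (B j)) ->
     P [set w | forall j, j \in s -> B j (W k j w)] = (\prod_(j <- s) P (W k j @^-1` B j))%E.
  move=> k s B us mB.
  pose E (i : Idx) := match i with inr (_, j) => W k j @^-1` B j | _ => setT end.
  have inj : injective (fun j : nat => (inr (k, j) : Idx)) by move=> x y [].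
  have u : uniq (map (fun j : nat => (inr (k, j) : Idx)) s) by rewrite map_inj_uniq.
  have hE : forall i, i \in map (fun j : nat => (inr (k, j) : Idx)) s -> G i (E i).
    by move=> i /mapP [j js ->]; exists (B j); split => //; apply: mB.
  have := hind' _ _ u hE; rewrite big_map.
  suff -> : [set w | forall i, i \in map (fun j : nat => (inr (k, j) : Idx)) s -> E i w] =
     [set w | forall j, j \in s -> B j (W k j w)] by [].
  apply/seteqP; split => w /= h.
    by move=> j js; apply: (h (inr (k, j))); apply: map_f.
  by move=> i /mapP [j js ->]; apply: h.
have lawW : forall (k : 'I_3) m, P [set w | \sum_(0 <= a < m) W k a w <= z] =
                              P [set w | \sum_(0 <= a < m) X a w <= z].
  move=> k m.
  apply: (@law R d T P (W k) (W (@Ordinal 3 0 isT))) => //.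
  - exact: indW.
  - exact: (indW (@Ordinal 3 0 isT)).
  - move=> a B mB; rewrite /= dX //.
    by case: k => [[|[|[|]]] ?] //=; [rewrite dX|rewrite dY|rewrite dZ].
pose i40 := @Ordinal 4 0 isT. pose i41 := @Ordinal 4 1 isT.
pose i42 := @Ordinal 4 2 isT. pose i43 := @Ordinal 4 3 isT.
pose i30 := @Ordinal 3 0 isT. pose i31 := @Ordinal 3 1 isT. pose i32 := @Ordinal 3 2 isT.
pose q m := P [set w | \sum_(0 <= a < m) X a w <= z].
pose am m := P (A1 @^-1` [set m]).
have mSW : forall k m, measurable [set w | \sum_(0 <= a < m) W k a w <= z].
  by move=> k m; apply: (sig_meas Gm); apply: evW.
have qge0 : forall m, (0 <= q m)%E by move=> m; apply: measure_ge0.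
have qle1 : forall m, (q m <= 1)%E by move=> m; apply: probability_le1; exact: (mSW i30).
have qmono : forall m n, (m <= n)%N -> (q n <= q m)%E.
  move=> m n mn; apply: le_measure; rewrite ?inE; [exact: (mSW i30)|exact: (mSW i30)|].
  move=> w /= h; apply: le_trans h.
  rewrite [leRHS](@big_cat_nat _ _ _ m) //= lerDl.
  by apply: sumr_ge0 => i _; apply: hX.
have qmax : forall m k, (q m * q k <= q (maxn m k))%E.
  move=> m k; case: (leqP m k) => mk.
    rewrite -[X in (_ <= X)%E]mul1e.
    by apply: lee_wpmul2r => //.
  rewrite -[X in (_ <= X)%E]mule1.
  by apply: lee_wpmul2l => //.
have dis1 : forall i, pA i40 i -> (pA i41 i || pW i30 i || pW i31 i) -> False.
  by move=> [k|[k a]] //= /eqP [->].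
have dis2 : forall i, pA i41 i -> (pW i30 i || pW i31 i) -> False.
  by move=> [k|[k a]] //= /eqP [->].
have dis3 : forall i, pW i30 i -> pW i31 i -> False.
  by move=> [k|[k a]] //= /eqP ->.
have dis4 : forall i, pA i42 i -> (pA i43 i || pW i32 i) -> False.
  by move=> [k|[k a]] //= /eqP [->].
have dis5 : forall i, pA i43 i -> pW i32 i -> False.
  by move=> [k|[k a]] //= /eqP [->].
pose SW k m := [set w | \sum_(0 <= a < m) W k a w <= z].
pose E m k := AA i40 @^-1` [set m] `&` (AA i41 @^-1` [set k] `&` (SW i30 m `&` SW i31 k)).
pose E' m k := AA i42 @^-1` [set m] `&` (AA i43 @^-1` [set k] `&` SW i32 (maxn m k)).
have PE : forall m k, P (E m k) = (am m * (am k * (q m * q k)))%E.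
  move=> m k.
  rewrite /E (sig_indep GT GI Gm hind' dis1 (evA i40 m)); last first.
    apply: sigI; first by apply: (sig_mono _ (evA i41 k)) => j ->.
    apply: sigI; first by apply: (sig_mono _ (evW i30 m)) => j ->; rewrite orbT.
    by apply: (sig_mono _ (evW i31 k)) => j ->; rewrite !orbT.
  rewrite (sig_indep GT GI Gm hind' dis2 (evA i41 k)); last first.
    apply: sigI; first by apply: (sig_mono _ (evW i30 m)) => j ->.
    by apply: (sig_mono _ (evW i31 k)) => j ->; rewrite orbT.
  rewrite (sig_indep GT GI Gm hind' dis3 (evW i30 m) (evW i31 k)).
  rewrite /SW !lawW /am.
  by rewrite [P (AA i41 @^-1` _)]dA2.
have PE' : forall m k, P (E' m k) = (am m * (am k * q (maxn m k)))%E.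
  move=> m k.
  rewrite /E' (sig_indep GT GI Gm hind' dis4 (evA i42 m)); last first.
    apply: sigI; first by apply: (sig_mono _ (evA i43 k)) => j ->.
    by apply: (sig_mono _ (evW i32 _)) => j ->; rewrite orbT.
  rewrite (sig_indep GT GI Gm hind' dis5 (evA i43 k) (evW i32 _)).
  rewrite /SW !lawW /am.
  by rewrite [P (AA i42 @^-1` _)]dA3 [P (AA i43 @^-1` _)]dA4.
have mE : forall m k, measurable (E m k).
  move=> m k; apply: measurableI; first exact: mAA.
  apply: measurableI; first exact: mAA.
  by apply: measurableI; apply: mSW.
have mE' : forall m k, measurable (E' m k).
  move=> m k; apply: measurableI; first exact: mAA.
  by apply: measurableI; [exact: mAA|apply: mSW].
pose LU := \bigcup_m \bigcup_k E m k.
pose LV := \bigcup_m \bigcup_k E' m k.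
have mLU : measurable LU.
  by apply: bigcupT_measurable => m; apply: bigcupT_measurable => k; apply: mE.
have mLV : measurable LV.
  by apply: bigcupT_measurable => m; apply: bigcupT_measurable => k; apply: mE'.
have eU : [set w | z < Num.max (\sum_(0 <= a < A1 w) X a w) (\sum_(0 <= b < A2 w) Y b w)] = ~` LU.
  apply/seteqP; split => w /=.
    rewrite ltNge ge_max => /negP h [m _ [k _ [h1 [h2 [h3 h4]]]]]; apply: h.
    by move: h1 h2 h3 h4; rewrite /SW /AA /W /= => -> -> -> ->.
  move=> h; rewrite ltNge ge_max; apply/negP => /andP [h3 h4]; apply: h.
  by exists (A1 w) => //; exists (A2 w).
have eV : [set w | z < \sum_(0 <= c < maxn (A3 w) (A4 w)) Z c w] = ~` LV.
  apply/seteqP; split => w /=.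
    rewrite ltNge => /negP h [m _ [k _ [h1 [h2 h3]]]]; apply: h.
    by move: h1 h2 h3; rewrite /SW /AA /W /= => -> ->.
  move=> h; rewrite ltNge; apply/negP => h3; apply: h.
  by exists (A3 w) => //; exists (A4 w).
rewrite eU eV !probability_setC //.
apply: leeB => //.
have mU : forall m, [set: nat] m -> measurable (\bigcup_k E m k).
  by move=> i _; apply: bigcupT_measurable => k; apply: mE.
have mV : forall m, [set: nat] m -> measurable (\bigcup_k E' m k).
  by move=> i _; apply: bigcupT_measurable => k; apply: mE'.
have tU : trivIset setT (fun m => \bigcup_k E m k).
  by move=> i j _ _ [w [[k _ [/= <- _]] [k' _ [/= -> _]]]].
have tV : trivIset setT (fun m => \bigcup_k E' m k).
  by move=> i j _ _ [w [[k _ [/= <- _]] [k' _ [/= -> _]]]].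
have tUk : forall m, trivIset setT (E m).
  by move=> m i j _ _ [w [[_ [/= <- _]] [_ [/= -> _]]]].
have tVk : forall m, trivIset setT (E' m).
  by move=> m i j _ _ [w [[_ [/= <- _]] [_ [/= -> _]]]].
rewrite /LU /LV (measure_bigcup P _ _ mU tU) (measure_bigcup P _ _ mV tV).
apply: lee_nneseries => [m _ _|m _]; first exact: measure_ge0.
rewrite (measure_bigcup P _ _ (fun k _ => mE m k) (tUk m)).
rewrite (measure_bigcup P _ _ (fun k _ => mE' m k) (tVk m)).
apply: lee_nneseries => [k _ _|k _]; first exact: measure_ge0.
apply: (@le_trans _ _ (am m * (am k * (q m * q k)))%E).
  by rewrite le_eqVlt; apply/orP; left; apply/eqP; exact: (PE m k).
apply: (@le_trans _ _ (am m * (am k * q (maxn m k)))%E); last first.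
  by rewrite le_eqVlt; apply/orP; left; apply/eqP; symmetry; exact: (PE' m k).
apply: lee_wpmul2l; first exact: measure_ge0.
apply: lee_wpmul2l; first exact: measure_ge0.
exact: qmax.
Qed.
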